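(* Let $N\ge 4$ be even and let $P_1,\dots,P_N$ be an $N$-periodic billiard trajectory in $E$, with outer polygon $P_1',\dots,P_N'$. For $j=1,2$ let $P'^{-1}_{j,i}=f_j+\dfrac{P_i'-f_j}{|P_i'-f_j|^2}$ be the inversion of $P_i'$ in the unit circle centered at $f_j$, and let $A_j'^\dagger$ be the signed area of the polygon $P'^{-1}_{j,1},\dots,P'^{-1}_{j,N}$. Then $A_1'^\dagger=A_2'^\dagger$, i.e. $A_1'^\dagger/A_2'^\dagger=1$.
   Context: Let $E$ be the ellipse $x^2/a^2+y^2/b^2=1$ with $a>b>0$, center $O=(0,0)$ and foci $f_1=(-\sqrt{a^2-b^2},0)$, $f_2=(\sqrt{a^2-b^2},0)$. An $N$-periodic billiard trajectory is a convex polygon with vertices $P_1,\dots,P_N\in E$ (indices mod $N$), listed counterclockwise and winding once around $O$, with $P_i\neq P_{i+1}$, such that at every vertex $P_i$ the normal line to $E$ at $P_i$ bisects the angle $\angle P_{i-1}P_iP_{i+1}$, and all of whose sides are tangent to a common ellipse confocal with $E$. Its outer polygon has vertices $P_i'$ = intersection of the tangent lines to $E$ at $P_i$ and at $P_{i+1}$. The signed area of a polygon with vertices $W_i=(x_i,y_i)$, $i=1,\dots,N$ (indices mod $N$), is $S=\tfrac12\sum_{i=1}^N (x_iy_{i+1}-x_{i+1}y_i)$. *)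

(* Defs.v *)
From Stdlib Require Import Reals Lra.
Open Scope R_scope.

Definition pt := (R * R)%type.
Definition px (p : pt) : R := fst p.
Definition py (p : pt) : R := snd p.
Definition vsub (p q : pt) : pt := (px p - px q, py p - py q).
Definition vadd (p q : pt) : pt := (px p + px q, py p + py q).
Definition vscale (k : R) (p : pt) : pt := (k * px p, k * py p).
Definition dot (p q : pt) : R := px p * px q + py p * py q.
Definition cross (p q : pt) : R := px p * py q - py p * px q.
Definition norm2 (p : pt) : R := dot p p.
Definition vnorm (p : pt) : R := sqrt (norm2 p).
Definition unitv (p : pt) : pt := vscale (/ vnorm p) p.

Definition on_ellipse (a b : R) (p : pt) : Prop :=
  px p ^ 2 / a ^ 2 + py p ^ 2 / b ^ 2 = 1.

(* (half) gradient of the ellipse equation: a normal vector at p *)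
Definition ell_normal (a b : R) (p : pt) : pt := (px p / a ^ 2, py p / b ^ 2).

Definition on_tangent_line (a b : R) (p X : pt) : Prop :=
  dot (vsub X p) (ell_normal a b p) = 0.

Definition line_tangent_to_ellipse (al be : R) (p q : pt) : Prop :=
  exists T : pt, on_ellipse al be T /\ cross (vsub q p) (vsub T p) = 0 /\
    dot (vsub q p) (ell_normal al be T) = 0.

Definition foc1 (a b : R) : pt := (- sqrt (a ^ 2 - b ^ 2), 0).
Definition foc2 (a b : R) : pt := (sqrt (a ^ 2 - b ^ 2), 0).

Definition invert (f Q : pt) : pt := vadd f (vscale (/ norm2 (vsub Q f)) (vsub Q f)).

(* signed area of the polygon W 0, ..., W (N-1) (indices mod N,
   W is assumed N-periodic so W N = W 0) *)
Definition signed_area (N : nat) (W : nat -> pt) : R :=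
  / 2 * sum_f_R0 (fun i => px (W i) * py (W (S i)) - px (W (S i)) * py (W i)) (pred N).

Definition billiard_trajectory (a b : R) (N : nat) (P : nat -> pt) : Prop :=
  (forall i, P (i + N)%nat = P i) /\
  (forall i, on_ellipse a b (P i)) /\
  (forall i, P i <> P (S i)) /\
  (* convex, counterclockwise, winding once around O: the vertices occur on E
     in strictly increasing eccentric-angle order, with total turn 2*PI *)
  (exists th : nat -> R,
      (forall i, th i < th (S i)) /\
      (forall i, th (i + N)%nat = th i + 2 * PI) /\
      (forall i, P i = (a * cos (th i), b * sin (th i)))) /\
  (* reflection law: the normal line at P i bisects angle P(i-1) P i P(i+1) *)
  (forall i, cross (vadd (unitv (vsub (P i) (P (S i))))
                         (unitv (vsub (P (S (S i))) (P (S i)))))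
                   (ell_normal a b (P (S i))) = 0) /\
  (exists al be : R, al > be /\ be > 0 /\ al ^ 2 - be ^ 2 = a ^ 2 - b ^ 2 /\
      forall i, line_tangent_to_ellipse al be (P i) (P (S i))).

(* Main.v *)
Require Import Defs.
From Stdlib Require Import Reals Lra Psatz Lia.
Open Scope R_scope.

Definition Ep (a b th : R) : pt := (a * cos th, b * sin th).

Lemma cos_lt1 x : 0 < x -> x < 2*PI -> cos x < 1.
Proof.
  intros H1 H2. replace x with (2*(x/2)) by field.
  rewrite cos_2a_sin.
  assert (0 < sin (x/2)) by (apply sin_gt_0; lra).
  nra.
Qed.

Lemma gap_ge x y : 0 <= x -> 0 <= y -> x + y < PI ->
  0 <= sin x + sin y - sin (x+y).
Proof.
  intros. rewrite sin_plus.
  assert (0 <= sin x) by (apply sin_ge_0; lra).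
  assert (0 <= sin y) by (apply sin_ge_0; lra).
  pose proof (COS_bound x). pose proof (COS_bound y). nra.
Qed.

Lemma gap_gt x y : 0 < x -> 0 < y -> x + y < PI ->
  0 < sin x + sin y - sin (x+y).
Proof.
  intros. rewrite sin_plus.
  assert (0 < sin x) by (apply sin_gt_0; lra).
  assert (0 < sin y) by (apply sin_gt_0; lra).
  assert (cos x < 1) by (apply cos_lt1; lra).
  assert (cos y < 1) by (apply cos_lt1; lra).
  nra.
Qed.

Lemma tang_id al be p q T : al > 0 -> be > 0 ->
  on_ellipse al be T -> cross (vsub q p) (vsub T p) = 0 ->
  dot (vsub q p) (ell_normal al be T) = 0 ->
  forall X, on_ellipse al be X ->
  al^2*(py q - py p)^2 + be^2*(px q - px p)^2 = (px p*(py q - py p) - py p*(px q - px p))^2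
  /\ ((py q - py p)*px X - (px q - px p)*py X)^2 <= (px p*(py q - py p) - py p*(px q - px p))^2.
Proof.
  intros Hal Hbe HT Hc Hd X HX.
  unfold on_ellipse, cross, dot, vsub, ell_normal in *. cbn [px py fst snd] in *.
  destruct T as [T1 T2]. destruct X as [X1 X2]. cbn [px py fst snd] in *.
  set (dx := px q - px p) in *. set (dy := py q - py p) in *.
  set (w := px p * dy - py p * dx).
  set (A := al^2) in *. set (B := be^2) in *.
  assert (HA : A > 0) by (unfold A; nra). assert (HB : B > 0) by (unfold B; nra).
  assert (E1 : B*T1^2 + A*T2^2 = A*B).
  { rewrite <- (Rmult_1_r (A*B)), <- HT. field; lra. }
  assert (E1' : B*X1^2 + A*X2^2 = A*B).
  { rewrite <- (Rmult_1_r (A*B)), <- HX. field; lra. }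
  assert (E2 : B*dx*T1 + A*dy*T2 = 0).
  { replace 0 with (A*B*0) by ring. rewrite <- Hd. field; lra. }
  assert (E3 : dy*T1 - dx*T2 = w). { unfold w. lra. }
  assert (key : (A*dy^2 + B*dx^2)*(B*T1^2 + A*T2^2) = A*B*(dy*T1 - dx*T2)^2 + (B*dx*T1 + A*dy*T2)^2) by ring.
  rewrite E1, E2, E3 in key.
  assert (I1 : A*dy^2 + B*dx^2 = w^2).
  { apply (Rmult_eq_reg_r (A*B)). lra. nra. }
  split; [exact I1|].
  assert (key2 : (A*dy^2 + B*dx^2)*(B*X1^2 + A*X2^2) = A*B*(dy*X1 - dx*X2)^2 + (B*dx*X1 + A*dy*X2)^2) by ring.
  rewrite E1', I1 in key2.
  assert (0 <= (B*dx*X1 + A*dy*X2)^2) by apply pow2_ge_0.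
  assert (A*B > 0) by nra.
  nra.
Qed.

Lemma Ep_w a b t0 t1 :
  let p := Ep a b t0 in let q := Ep a b t1 in
  px p*(py q - py p) - py p*(px q - px p) = a*b*sin(t1-t0).
Proof. simpl. unfold px, py; cbn [fst snd]. rewrite sin_minus. ring. Qed.

Lemma Ep_lam a b t0 t1 th :
  let p := Ep a b t0 in let q := Ep a b t1 in let X := Ep a b th in
  (py q - py p)*px X - (px q - px p)*py X - (px p*(py q - py p) - py p*(px q - px p))
  = a*b*(sin(t1-th) + sin(th-t0) - sin(t1-t0)).
Proof. simpl. unfold px, py; cbn [fst snd]. rewrite !sin_minus. ring. Qed.

Lemma Ep_on a b th : a > 0 -> b > 0 -> on_ellipse a b (Ep a b th).
Proof.
  intros. unfold on_ellipse, Ep, px, py; cbn [fst snd].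
  pose proof (sin2_cos2 th). unfold Rsqr in H1.
  replace ((a * cos th) ^ 2 / a ^ 2 + (b * sin th) ^ 2 / b ^ 2) with (sin th * sin th + cos th * cos th) by (field; lra).
  exact H1.
Qed.

Lemma be_lt_b a b al be t0 t1 : a > 0 -> b > 0 -> al > 0 -> be > 0 ->
  al^2 - be^2 = a^2 - b^2 -> 0 < t1 - t0 < 2*PI ->
  line_tangent_to_ellipse al be (Ep a b t0) (Ep a b t1) -> be^2 < b^2.
Proof.
  intros Ha Hb Hal Hbe Hconf Ht [T [HT1 [HT2 HT3]]].
  destruct (tang_id al be _ _ T Hal Hbe HT1 HT2 HT3 T HT1) as [I _].
  rewrite Ep_w in I. unfold Ep, px, py in I; cbn [fst snd] in I.
  set (lam := b^2 - be^2).
  assert (Hal2 : al^2 = a^2 - lam) by (unfold lam; lra).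
  assert (Hbe2 : be^2 = b^2 - lam) by (unfold lam; lra).
  rewrite Hal2, Hbe2, sin_minus in I.
  pose proof (sin2_cos2 t0) as U0. pose proof (sin2_cos2 t1) as U1. unfold Rsqr in U0, U1.
  set (c := cos t1 * cos t0 + sin t1 * sin t0).
  assert (Hc : c < 1).
  { unfold c. rewrite <- cos_minus. apply cos_lt1; lra. }
  set (K := b^2*(sin t1 - sin t0)^2 + a^2*(cos t1 - cos t0)^2).
  assert (HK : 0 <= K).
  { unfold K. apply Rplus_le_le_0_compat; apply Rmult_le_pos; apply pow2_ge_0. }
  set (s0 := sin t0) in *. set (s1 := sin t1) in *. set (c0 := cos t0) in *. set (c1 := cos t1) in *.
  assert (Eq : a^2*b^2*(1-c)^2 - lam*K =
     ((a^2-lam)*(b*(s1-s0))^2 + (b^2-lam)*(a*(c1-c0))^2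
       - (a*b*(s1*c0-c1*s0))^2) + a^2*b^2*(s0*s0+c0*c0-1)*(s1*s1+c1*c1-1)).
  { unfold c, K. ring. }
  assert (I' : (a^2-lam)*(b*(s1-s0))^2 + (b^2-lam)*(a*(c1-c0))^2
       - (a*b*(s1*c0-c1*s0))^2 = 0).
  { rewrite <- (Rminus_diag_eq _ _ I). ring. }
  rewrite I', U0, U1 in Eq.
  clearbody lam c K s0 s1 c0 c1.
  assert (0 < a^2*b^2*(1-c)^2).
  { apply Rmult_lt_0_compat; [apply Rmult_lt_0_compat|]; apply pow_lt; lra. }
  assert (0 < lam).
  { destruct (Rle_or_lt lam 0) as [Hl|Hl]; [|exact Hl].
    assert (0 <= (-lam) * K) by (apply Rmult_le_pos; lra). lra. }
  lra.
Qed.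

Lemma between a b p q T : a > 0 -> b > 0 ->
  on_ellipse a b p -> on_ellipse a b q ->
  (px q - px p <> 0 \/ py q - py p <> 0) ->
  cross (vsub q p) (vsub T p) = 0 ->
  px T ^2 / a^2 + py T ^2 / b^2 < 1 ->
  exists al, 0 < al < 1 /\ px T = px p + al*(px q - px p) /\ py T = py p + al*(py q - py p).
Proof.
  intros Ha Hb Hp Hq Hne Hc HT.
  unfold on_ellipse, cross, vsub in *. cbn [px py fst snd] in *.
  destruct p as [p1 p2]; destruct q as [q1 q2]; destruct T as [T1 T2].
  unfold px, py in *; cbn [fst snd] in *.
  set (d1 := q1 - p1) in *. set (d2 := q2 - p2) in *.
  assert (Hn : 0 < d1*d1 + d2*d2).
  { destruct Hne as [H|H]; [assert (0 < d1*d1) by (apply Rsqr_pos_lt; exact H)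
                           |assert (0 < d2*d2) by (apply Rsqr_pos_lt; exact H)];
    assert (0 <= d1*d1) by apply Rle_0_sqr; assert (0 <= d2*d2) by apply Rle_0_sqr; lra. }
  set (n := d1*d1+d2*d2) in *. set (X := (T1-p1)*d1 + (T2-p2)*d2).
  set (al := X / n).
  assert (K1 : (T1 - p1)*n = d1*X).
  { replace ((T1-p1)*n) with (d1*X - d2*(d1*(T2-p2) - d2*(T1-p1))) by (unfold n, X; ring).
    rewrite Hc; ring. }
  assert (K2 : (T2 - p2)*n = d2*X).
  { replace ((T2-p2)*n) with (d2*X + d1*(d1*(T2-p2) - d2*(T1-p1))) by (unfold n, X; ring).
    rewrite Hc; ring. }
  assert (E1 : T1 = p1 + al*d1).
  { apply (Rmult_eq_reg_r n); [|lra]. unfold al.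
    replace ((p1 + X/n*d1)*n) with (p1*n + d1*X) by (field; lra). rewrite <- K1; ring. }
  assert (E2 : T2 = p2 + al*d2).
  { apply (Rmult_eq_reg_r n); [|lra]. unfold al.
    replace ((p2 + X/n*d2)*n) with (p2*n + d2*X) by (field; lra). rewrite <- K2; ring. }
  clearbody al.
  set (Qd := d1^2/a^2 + d2^2/b^2).
  assert (HQd : 0 < Qd).
  { unfold Qd.
    assert (0 <= d1^2/a^2) by (apply Rmult_le_pos; [apply pow2_ge_0| left; apply Rinv_0_lt_compat; apply pow_lt; lra]).
    assert (0 <= d2^2/b^2) by (apply Rmult_le_pos; [apply pow2_ge_0| left; apply Rinv_0_lt_compat; apply pow_lt; lra]).
    destruct Hne as [Hz|Hz].
    - assert (0 < d1^2/a^2); [|lra]. apply Rdiv_lt_0_compat; [|apply pow_lt; lra]. replace (d1^2) with (d1*d1) by ring; apply Rsqr_pos_lt; exact Hz.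
    - assert (0 < d2^2/b^2); [|lra]. apply Rdiv_lt_0_compat; [|apply pow_lt; lra]. replace (d2^2) with (d2*d2) by ring; apply Rsqr_pos_lt; exact Hz. }
  assert (Hid : T1^2/a^2 + T2^2/b^2 = 1 + al*(al-1)*Qd + (1-al)*(p1^2/a^2+p2^2/b^2 - 1) + al*(q1^2/a^2+q2^2/b^2 - 1)).
  { rewrite E1, E2. unfold Qd, d1, d2. field. lra. }
  rewrite Hp, Hq in Hid.
  assert (al*(al-1)*Qd < 0) by lra.
  exists al. split; [|split; assumption].
  destruct (Rle_or_lt al 0); destruct (Rle_or_lt 1 al); try (split; lra);
  exfalso; assert (0 <= al*(al-1)) by nra;
  assert (0 <= al*(al-1)*Qd) by (apply Rmult_le_pos; lra); lra.
Qed.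

Lemma inside_C a b al be T : a > 0 -> b > 0 -> al > 0 -> be > 0 -> al^2 < a^2 -> be^2 < b^2 ->
  on_ellipse al be T -> px T ^2 / a^2 + py T ^2 / b^2 < 1.
Proof.
  intros Ha Hb Hal Hbe H1 H2 HT. unfold on_ellipse in HT.
  set (x := px T) in *. set (y := py T) in *. clearbody x y.
  assert (Ia : / a^2 < / al^2) by (apply Rinv_lt_contravar; [apply Rmult_lt_0_compat; apply pow_lt|]; lra).
  assert (Ib : / b^2 < / be^2) by (apply Rinv_lt_contravar; [apply Rmult_lt_0_compat; apply pow_lt|]; lra).
  assert (Hx : 0 <= x^2) by apply pow2_ge_0. assert (Hy : 0 <= y^2) by apply pow2_ge_0.
  unfold Rdiv in *.
  destruct (Req_dec x 0) as [Ex|Ex].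
  - assert (0 < y^2).
    { destruct (Req_dec y 0) as [Ey|Ey]. rewrite Ex, Ey in HT. exfalso. replace (0^2 * / al^2 + 0^2 * / be^2) with 0 in HT by ring. lra.
      replace (y^2) with (y*y) by ring. apply Rsqr_pos_lt; auto. }
    assert (x^2 * / a^2 <= x^2 * / al^2) by (apply Rmult_le_compat_l; lra).
    assert (y^2 * / b^2 < y^2 * / be^2) by (apply Rmult_lt_compat_l; lra). lra.
  - assert (0 < x^2) by (replace (x^2) with (x*x) by ring; apply Rsqr_pos_lt; auto).
    assert (x^2 * / a^2 < x^2 * / al^2) by (apply Rmult_lt_compat_l; lra).
    assert (y^2 * / b^2 <= y^2 * / be^2) by (apply Rmult_le_compat_l; lra). lra.
Qed.

Lemma NL a b al be t0 t1 s0 s1 : a > 0 -> b > 0 -> al > 0 -> be > 0 -> al^2 < a^2 -> be^2 < b^2 ->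
  t0 <= s0 -> s0 < s1 -> s1 <= t1 -> t1 - t0 < PI -> (t0 < s0 \/ s1 < t1) ->
  line_tangent_to_ellipse al be (Ep a b t0) (Ep a b t1) ->
  line_tangent_to_ellipse al be (Ep a b s0) (Ep a b s1) -> False.
Proof.
  intros Ha Hb Hal Hbe Ha2 Hb2 H1 H2 H3 H4 H5 [T [HT1 [HT2 HT3]]] [T' [HT1' [HT2' HT3']]].
  pose proof (tang_id al be _ _ T Hal Hbe HT1 HT2 HT3 T' HT1') as [_ Hbd].
  rewrite Ep_w in Hbd.
  assert (Hw : 0 < a*b*sin(t1-t0)).
  { apply Rmult_lt_0_compat; [apply Rmult_lt_0_compat; lra|]. apply sin_gt_0; lra. }
  assert (Hne : px (Ep a b s1) - px (Ep a b s0) <> 0 \/ py (Ep a b s1) - py (Ep a b s0) <> 0).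
  { unfold Ep, px, py; cbn [fst snd].
    destruct (Req_dec (a*cos s1 - a*cos s0) 0) as [E1|E1]; [|left; exact E1].
    destruct (Req_dec (b*sin s1 - b*sin s0) 0) as [E2|E2]; [|right; exact E2].
    exfalso.
    assert (C1 : cos s1 = cos s0).
    { apply (Rmult_eq_reg_l a); lra. }
    assert (C2 : sin s1 = sin s0).
    { apply (Rmult_eq_reg_l b); lra. }
    assert (0 < sin (s1 - s0)) by (apply sin_gt_0; lra).
    rewrite sin_minus, C1, C2 in H. lra. }
  destruct (between a b _ _ T' Ha Hb (Ep_on a b s0 Ha Hb) (Ep_on a b s1 Ha Hb) Hne HT2'
              (inside_C a b al be T' Ha Hb Hal Hbe Ha2 Hb2 HT1')) as [al0 [Hal0 [E1 E2]]].
  pose proof (Ep_lam a b t0 t1 s0) as L0. pose proof (Ep_lam a b t0 t1 s1) as L1.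
  cbv zeta in L0, L1. rewrite Ep_w in L0, L1.
  set (px0 := px (Ep a b t0)) in *. set (py0 := py (Ep a b t0)) in *.
  set (px1 := px (Ep a b t1)) in *. set (py1 := py (Ep a b t1)) in *.
  set (w := a*b*sin(t1-t0)) in *.
  set (u0 := px (Ep a b s0)) in *. set (v0 := py (Ep a b s0)) in *.
  set (u1 := px (Ep a b s1)) in *. set (v1 := py (Ep a b s1)) in *.
  set (X := px T') in *. set (Y := py T') in *.
  assert (G0 : 0 <= sin (t1 - s0) + sin (s0 - t0) - sin (t1 - t0)).
  { replace (t1 - t0) with ((t1 - s0) + (s0 - t0)) by ring. apply gap_ge; lra. }
  assert (G1 : 0 <= sin (t1 - s1) + sin (s1 - t0) - sin (t1 - t0)).
  { replace (t1 - t0) with ((t1 - s1) + (s1 - t0)) by ring. apply gap_ge; lra. }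
  assert (Gs : 0 < sin (t1 - s0) + sin (s0 - t0) - sin (t1 - t0) \/
               0 < sin (t1 - s1) + sin (s1 - t0) - sin (t1 - t0)).
  { destruct H5.
    - left. replace (t1 - t0) with ((t1 - s0) + (s0 - t0)) by ring. apply gap_gt; lra.
    - right. replace (t1 - t0) with ((t1 - s1) + (s1 - t0)) by ring. apply gap_gt; lra. }
  set (g0 := sin (t1 - s0) + sin (s0 - t0) - sin (t1 - t0)) in *.
  set (g1 := sin (t1 - s1) + sin (s1 - t0) - sin (t1 - t0)) in *.
  assert (Hab : 0 < a*b) by (apply Rmult_lt_0_compat; lra).
  set (dx := px1 - px0) in *. set (dy := py1 - py0) in *.
  assert (LT : dy*X - dx*Y - w = (1-al0)*(dy*u0 - dx*v0 - w) + al0*(dy*u1 - dx*v1 - w)).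
  { rewrite E1, E2. ring. }
  rewrite L0, L1 in LT.
  clearbody px0 py0 px1 py1 w u0 v0 u1 v1 X Y g0 g1 dx dy.
  assert (Pos : 0 < (1-al0)*(a*b*g0) + al0*(a*b*g1)).
  { destruct Gs.
    - assert (0 < (1-al0)*(a*b*g0)) by (apply Rmult_lt_0_compat; [lra| apply Rmult_lt_0_compat; lra]).
      assert (0 <= al0*(a*b*g1)) by (apply Rmult_le_pos; [lra| apply Rmult_le_pos; lra]). lra.
    - assert (0 <= (1-al0)*(a*b*g0)) by (apply Rmult_le_pos; [lra| apply Rmult_le_pos; lra]).
      assert (0 < al0*(a*b*g1)) by (apply Rmult_lt_0_compat; [lra| apply Rmult_lt_0_compat; lra]). lra. }
  rewrite <- LT in Pos.
  set (z := dy*X - dx*Y) in *. clearbody z.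
  assert (z > w) by lra.
  assert (w*w < z*z) by (apply Rmult_le_0_lt_compat; lra).
  replace (w^2) with (w*w) in Hbd by ring. replace (z^2) with (z*z) in Hbd by ring.
  lra.
Qed.

Definition negp (p : pt) : pt := (- px p, - py p).

Lemma tangent_swap al be p q : line_tangent_to_ellipse al be p q -> line_tangent_to_ellipse al be q p.
Proof.
  intros [T [H1 [H2 H3]]]. exists T. split; [exact H1|]. split.
  - unfold cross, vsub in *; cbn [px py fst snd] in *. unfold px, py in *; cbn [fst snd] in *.
    rewrite <- (Rmult_0_l (-1)), <- H2. ring.
  - unfold dot, vsub in *. unfold px, py in *; cbn [fst snd] in *.
    rewrite <- (Rmult_0_l (-1)), <- H3. ring.
Qed.

Lemma tangent_neg al be p q : line_tangent_to_ellipse al be p q -> line_tangent_to_ellipse al be (negp p) (negp q).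
Proof.
  intros [T [H1 [H2 H3]]]. exists (negp T). split; [|split].
  - unfold on_ellipse, negp in *. unfold px, py in *; cbn [fst snd] in *. rewrite <- H1. unfold Rdiv. ring.
  - unfold cross, vsub, negp in *. unfold px, py in *; cbn [fst snd] in *.
    rewrite <- H2. ring.
  - unfold dot, vsub, negp, ell_normal in *. unfold px, py in *; cbn [fst snd] in *.
    rewrite <- H3. unfold Rdiv. ring.
Qed.

Lemma Ep_2pi a b x : Ep a b (x + 2*PI) = Ep a b x.
Proof. unfold Ep. rewrite cos_plus, sin_plus, cos_2PI, sin_2PI. f_equal; ring. Qed.

Lemma Ep_pi a b x : Ep a b (x + PI) = negp (Ep a b x).
Proof. unfold Ep, negp, px, py; cbn [fst snd]. rewrite neg_cos, neg_sin. f_equal; ring. Qed.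

Lemma Ep_mpi a b x : Ep a b (x - PI) = negp (Ep a b x).
Proof. unfold Ep, negp, px, py; cbn [fst snd]. rewrite cos_minus, sin_minus, cos_PI, sin_PI. f_equal; ring. Qed.

Lemma neg_neg p : negp (negp p) = p.
Proof. destruct p. unfold negp, px, py; cbn. f_equal; ring. Qed.

Lemma OL a b al be t0 t1 s0 s1 : a > 0 -> b > 0 -> al > 0 -> be > 0 -> al^2 < a^2 -> be^2 < b^2 ->
  t0 < t1 -> t1 - t0 < PI -> s0 < s1 -> t0 < s0 ->
  line_tangent_to_ellipse al be (Ep a b t0) (Ep a b t1) ->
  line_tangent_to_ellipse al be (Ep a b s0) (Ep a b s1) -> t1 < s1.
Proof.
  intros. destruct (Rlt_or_le t1 s1) as [H'|H']; [exact H'|]. exfalso.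
  apply (NL a b al be t0 t1 s0 s1); auto; lra.
Qed.

Lemma on_tangent_neg a b p X : on_tangent_line a b p X -> on_tangent_line a b (negp p) (negp X).
Proof.
  unfold on_tangent_line, dot, vsub, negp, ell_normal, px, py; cbn [fst snd].
  intros H. rewrite <- H. unfold Rdiv. ring.
Qed.

Lemma tang_unique a b u v X Y : a > 0 -> b > 0 -> sin (v - u) <> 0 ->
  on_tangent_line a b (Ep a b u) X -> on_tangent_line a b (Ep a b v) X ->
  on_tangent_line a b (Ep a b u) Y -> on_tangent_line a b (Ep a b v) Y -> X = Y.
Proof.
  intros Ha Hb Hs H1 H2 H3 H4. destruct X as [X1 X2]; destruct Y as [Y1 Y2].
  unfold on_tangent_line, dot, vsub, ell_normal, Ep, px, py in *; cbn [fst snd] in *.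
  rewrite sin_minus in Hs.
  set (cu := cos u) in *. set (su := sin u) in *. set (cv := cos v) in *. set (sv := sin v) in *.
  assert (K1 : (X1 - Y1) * cu / a + (X2 - Y2) * su / b = 0).
  { replace 0 with (0 - 0) by ring. rewrite <- H1 at 1. rewrite <- H3. field. lra. }
  assert (K2 : (X1 - Y1) * cv / a + (X2 - Y2) * sv / b = 0).
  { replace 0 with (0 - 0) by ring. rewrite <- H2 at 1. rewrite <- H4. field. lra. }
  clearbody cu su cv sv.
  assert (Z1 : (X1 - Y1) * (sv*cu - cv*su) = 0).
  { replace ((X1 - Y1) * (sv*cu - cv*su)) with (a * (sv * ((X1 - Y1) * cu / a + (X2 - Y2) * su / b) - su * ((X1 - Y1) * cv / a + (X2 - Y2) * sv / b))) by (field; lra).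
    rewrite K1, K2. ring. }
  assert (Z2 : (X2 - Y2) * (sv*cu - cv*su) = 0).
  { replace ((X2 - Y2) * (sv*cu - cv*su)) with (b * (cu * ((X1 - Y1) * cv / a + (X2 - Y2) * sv / b) - cv * ((X1 - Y1) * cu / a + (X2 - Y2) * su / b))) by (field; lra).
    rewrite K1, K2. ring. }
  apply Rmult_integral in Z1. apply Rmult_integral in Z2.
  destruct Z1 as [Z1|Z1]; [|contradiction]. destruct Z2 as [Z2|Z2]; [|contradiction].
  f_equal; lra.
Qed.

Lemma inv_neg a b X : invert (foc2 a b) (negp X) = negp (invert (foc1 a b) X).
Proof.
  assert (Hn : norm2 (vsub (negp X) (foc2 a b)) = norm2 (vsub X (foc1 a b))).
  { unfold norm2, dot, vsub, negp, foc1, foc2, px, py; cbn [fst snd]. ring. }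
  unfold invert. rewrite Hn. set (k := / norm2 (vsub X (foc1 a b))). clearbody k.
  unfold vadd, vscale, vsub, negp, foc1, foc2, px, py; cbn [fst snd]. f_equal; ring.
Qed.

Lemma sum_shift1 (g : nat -> R) n :
  sum_f_R0 (fun i => g (S i)) n = sum_f_R0 g n - g 0%nat + g (S n).
Proof.
  induction n.
  - simpl. ring.
  - simpl sum_f_R0 at 1. rewrite IHn. simpl. ring.
Qed.

Lemma sum_shift (f : nat -> R) N M : (1 <= N)%nat -> (forall i, f (i + N)%nat = f i) ->
  sum_f_R0 (fun i => f (i + M)%nat) (pred N) = sum_f_R0 f (pred N).
Proof.
  intros HN Hp. induction M.
  - apply sum_eq. intros i _. f_equal. lia.
  - rewrite <- IHM.
    transitivity (sum_f_R0 (fun i => (fun j => f (j + M)%nat) (S i)) (pred N)).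
    { apply sum_eq. intros i _. cbv beta. f_equal. lia. }
    rewrite (sum_shift1 (fun j => f (j + M)%nat)). cbv beta.
    replace (S (pred N) + M)%nat with (M + N)%nat by lia. rewrite Hp.
    replace (0 + M)%nat with M by lia. ring.
Qed.

Lemma no_pi a b al be t : a > 0 -> b > 0 -> al > 0 -> be > 0 ->
  ~ line_tangent_to_ellipse al be (Ep a b t) (Ep a b (t + PI)).
Proof.
  intros Ha Hb Hal Hbe [T [H1 [H2 H3]]].
  destruct (tang_id al be _ _ T Hal Hbe H1 H2 H3 T H1) as [I _].
  rewrite Ep_w in I. replace (t + PI - t) with PI in I by ring. rewrite sin_PI in I.
  rewrite Ep_pi in I. unfold Ep, negp, px, py in I; cbn [fst snd] in I.
  pose proof (sin2_cos2 t) as U. unfold Rsqr in U.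
  set (s := sin t) in *. set (c := cos t) in *. clearbody s c.
  assert (E : 4*(al^2*b^2)*(s*s) + 4*(be^2*a^2)*(c*c) = 0).
  { replace 0 with ((a*b*0)^2) by ring. rewrite <- I. ring. }
  assert (P1 : 0 < al^2*b^2) by (apply Rmult_lt_0_compat; apply pow_lt; lra).
  assert (P2 : 0 < be^2*a^2) by (apply Rmult_lt_0_compat; apply pow_lt; lra).
  assert (0 <= s*s) by apply Rle_0_sqr. assert (0 <= c*c) by apply Rle_0_sqr.
  assert (0 <= (al^2*b^2)*(s*s)) by (apply Rmult_le_pos; lra).
  assert (0 <= (be^2*a^2)*(c*c)) by (apply Rmult_le_pos; lra).
  assert (Z1 : (al^2*b^2)*(s*s) = 0) by lra.
  assert (Z2 : (be^2*a^2)*(c*c) = 0) by lra.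
  apply Rmult_integral in Z1. apply Rmult_integral in Z2. lra.
Qed.

Theorem mainTheorem5 (a b : R) (N : nat) (P Q : nat -> pt) :
  a > b -> b > 0 ->
  (4 <= N)%nat -> Nat.Even N ->
  billiard_trajectory a b N P ->
  (forall i, on_tangent_line a b (P i) (Q i) /\ on_tangent_line a b (P (S i)) (Q i)) ->
  signed_area N (fun i => invert (foc1 a b) (Q i)) =
  signed_area N (fun i => invert (foc2 a b) (Q i)).
Proof.
  intros Hab Hb HN [M HM] Hbil HQ.
  destruct Hbil as [Hper [Hon [Hneq [[th [Hinc [Hth HP]]] [Hrefl [al [be [Habe [Hbe0 [Hconf Htan]]]]]]]]]].
  assert (Ha : a > 0) by lra. assert (Hal : al > 0) by lra.
  assert (HPE : forall i, P i = Ep a b (th i)) by (intro; rewrite HP; reflexivity).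
  assert (Ht : forall i, line_tangent_to_ellipse al be (Ep a b (th i)) (Ep a b (th (S i)))).
  { intro i. rewrite <- !HPE. apply Htan. }
  assert (Hmono : forall i k, th i < th (i + S k)%nat).
  { intros i k; induction k.
    - replace (i + 1)%nat with (S i) by lia; apply Hinc.
    - replace (i + S (S k))%nat with (S (i + S k)) by lia. specialize (Hinc (i + S k)%nat). lra. }
  assert (Hlt : forall i j, (i < j)%nat -> th i < th j).
  { intros i j Hij. replace j with (i + S (j - S i))%nat by lia. apply Hmono. }
  assert (H2pi : forall i, th (S i) - th i < 2*PI).
  { intros i. pose proof (Hth i). assert (th (S i) < th (i+N)%nat) by (apply Hlt; lia). lra. }
  assert (Hpos : forall i, 0 < th (S i) - th i) by (intro i; specialize (Hinc i); lra).
  assert (Hbe2 : be^2 < b^2).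
  { apply (be_lt_b a b al be (th 0%nat) (th 1%nat)); auto; try (split; [apply Hpos|apply H2pi]). }
  assert (Hal2 : al^2 < a^2) by lra.
  assert (Hfwd : forall i, th (S i) - th i < PI).
  { intro i. destruct (Rlt_or_le (th (S i) - th i) PI) as [h|h]; [exact h|exfalso].
    destruct (Req_dec (th (S i) - th i) PI) as [Heq|Hne].
    - apply (no_pi a b al be (th i)); auto. replace (th i + PI) with (th (S i)) by lra. apply Ht.
    - assert (th (S (S i)) < th (i + N)%nat) by (apply Hlt; lia).
      rewrite Hth in H.
      apply (NL a b al be (th (S i)) (th i + 2*PI) (th (S i)) (th (S (S i)))); auto; try lra;
      try (specialize (Hinc (S i)); lra); try (rewrite Ep_2pi; apply tangent_swap; apply Ht). }
  assert (Hts : forall k, line_tangent_to_ellipse al be (Ep a b (th (k+M)%nat - PI)) (Ep a b (th (S k + M)%nat - PI))).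
  { intro k. rewrite !Ep_mpi. replace (S k + M)%nat with (S (k+M)) by lia. apply tangent_neg, Ht. }
  assert (HthN : forall i, th (i + M + M)%nat = th i + 2*PI).
  { intro i. replace (i+M+M)%nat with (i+N)%nat by lia. apply Hth. }
  assert (HSM : forall k, th (S k + M)%nat - PI - (th (k + M)%nat - PI) = th (S (k + M)) - th (k+M)%nat).
  { intro k. replace (S k + M)%nat with (S (k+M)) by lia. ring. }
  assert (Sym : forall j, th (j + M)%nat = th j + PI).
  { intro j. destruct (Rtotal_order (th (j+M)%nat - PI) (th j)) as [Hl|[He|Hg]].
    - exfalso.
      assert (Hk : forall k, th (j + k + M)%nat - PI < th (j+k)%nat).
      { induction k.
        - replace (j+0)%nat with j by lia. exact Hl.
        - replace (j + S k)%nat with (S (j+k)) by lia.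
          apply (OL a b al be (th (j+k+M)%nat - PI) (th (S (j+k) + M)%nat - PI) (th (j+k)%nat) (th (S (j+k)))); auto;
          try (pose proof (HSM (j+k)%nat); specialize (Hpos (j+k+M)%nat); lra);
          try (pose proof (HSM (j+k)%nat); specialize (Hfwd (j+k+M)%nat); lra);
          try (specialize (Hpos (j+k)%nat); lra). }
      specialize (Hk M). rewrite HthN in Hk. lra.
    - lra.
    - exfalso.
      assert (Hk : forall k, th (j+k)%nat < th (j + k + M)%nat - PI).
      { induction k.
        - replace (j+0)%nat with j by lia. exact Hg.
        - replace (j + S k)%nat with (S (j+k)) by lia.
          apply (OL a b al be (th (j+k)%nat) (th (S (j+k))) (th (j+k+M)%nat - PI) (th (S (j+k) + M)%nat - PI)); auto;
          try (specialize (Hpos (j+k)%nat); lra);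
          try (pose proof (HSM (j+k)%nat); specialize (Hpos (j+k+M)%nat); lra). }
      specialize (Hk M). rewrite HthN in Hk. lra. }
  assert (HPs : forall i, Ep a b (th (i+M)%nat) = negp (Ep a b (th i))).
  { intro i. rewrite Sym. apply Ep_pi. }
  assert (HQs : forall i, Q (i+M)%nat = negp (Q i)).
  { intro i. destruct (HQ (i+M)%nat) as [A1 A2]. destruct (HQ i) as [B1 B2].
    rewrite HPE in A1, A2, B1, B2.
    apply (tang_unique a b (th (i+M)%nat) (th (S (i+M)))); auto.
    - apply Rgt_not_eq. apply sin_gt_0; [apply Hpos|apply Hfwd].
    - rewrite HPs. apply on_tangent_neg; exact B1.
    - replace (S (i+M)) with (S i + M)%nat by lia. rewrite HPs. apply on_tangent_neg; exact B2. }
  assert (HQN : forall i, Q (i+N)%nat = Q i).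
  { intro i. replace (i+N)%nat with (i+M+M)%nat by lia. rewrite !HQs. apply neg_neg. }
  assert (HW : forall i, invert (foc2 a b) (Q i) = negp (invert (foc1 a b) (Q (i+M)%nat))).
  { intro i. rewrite <- inv_neg, HQs, neg_neg. reflexivity. }
  unfold signed_area. f_equal.
  set (tV := fun j => px (invert (foc1 a b) (Q j)) * py (invert (foc1 a b) (Q (S j))) -
                      px (invert (foc1 a b) (Q (S j))) * py (invert (foc1 a b) (Q j))).
  transitivity (sum_f_R0 (fun i => tV (i + M)%nat) (pred N)).
  - symmetry. apply sum_shift; [lia|].
    intro i. unfold tV. replace (S (i+N)) with (S i + N)%nat by lia. rewrite !HQN. reflexivity.
  - apply sum_eq. intros i _. unfold tV. cbv beta.
    rewrite !HW. replace (S i + M)%nat with (S (i + M)) by lia.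
    unfold negp, px, py; cbn [fst snd]. ring.
Qed.
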